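(* Consider an instance of Matroidal Demand Matching with optimum value $\mathrm{OPT}$. For each $\epsilon>0$ there is a feasible solution $M\subseteq E$ with the following properties: (1) $p(M)\ge(1-2\epsilon)\,\mathrm{OPT}$; (2) for each $v\in V$ there is some $M_v\subseteq M$ with $|M_v|\le 1/\epsilon^2$ such that $d_{v,e}\le\epsilon\cdot\big(b_v-\sum_{f\in\delta(v)\cap M_v}d_{v,f}\big)$ for all $e\in\delta(v)\cap(M\setminus M_v)$.
   Context: Matroidal Demand Matching: a graph $G=(V,E)$ (parallel edges allowed) with capacities $b_v\ge0$, for each edge $e=uv$ demands $d_{u,e},d_{v,e}\ge0$ and a profit $p_e\ge0$, and a matroid $\mathcal M=(E,\mathcal I)$; a set $F\subseteq E$ is feasible if $F\in\mathcal I$ and $\sum_{e\in\delta(v)\cap F}d_{v,e}\le b_v$ for all $v\in V$; the goal is to maximize $p(F)=\sum_{e\in F}p_e$ over feasible $F$. $\delta(v)$ is the set of edges incident to $v$. *)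

(* Defs.v *)
From HB Require Import structures.
From mathcomp Require Import all_boot all_order all_algebra.
Set Implicit Arguments. Unset Strict Implicit. Unset Printing Implicit Defensive.
Import Order.TTheory GRing.Theory Num.Theory.
Local Open Scope ring_scope.

Definition is_matroid (E : finType) (I : {set {set E}}) : Prop :=
  [/\ set0 \in I,
      (forall A B : {set E}, B \in I -> A \subset B -> A \in I) &
      (forall A B : {set E}, A \in I -> B \in I -> (#|A| < #|B|)%N ->
         exists2 x, x \in B :\: A & x |: A \in I)].

Definition delta (V E : finType) (ends : E -> V * V) (v : V) : {set E} :=
  [set e | ((ends e).1 == v) || ((ends e).2 == v)].

Definition profit (R : numDomainType) (E : finType) (p : E -> R) (F : {set E}) : R :=
  \sum_(e in F) p e.

Definition load (R : numDomainType) (V E : finType) (ends : E -> V * V)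
  (d : V -> E -> R) (v : V) (F : {set E}) : R :=
  \sum_(e in delta ends v :&: F) d v e.

Definition mdm_feasible (R : numDomainType) (V E : finType) (ends : E -> V * V)
  (b : V -> R) (d : V -> E -> R) (I : {set {set E}}) (F : {set E}) : Prop :=
  F \in I /\ forall v : V, load ends d v F <= b v.

Definition mdm_optimal (R : numDomainType) (V E : finType) (ends : E -> V * V)
  (b : V -> R) (d : V -> E -> R) (p : E -> R) (I : {set {set E}}) (F : {set E}) : Prop :=
  mdm_feasible ends b d I F /\
  forall G : {set E}, mdm_feasible ends b d I G -> profit p G <= profit p F.

(* Main.v *)
Require Import Defs.
From HB Require Import structures.
From mathcomp Require Import all_boot all_order all_algebra.
From mathcomp Require Import zify ring lra.
From Stdlib Require Import Logic.IndefiniteDescription Logic.Classical_Prop.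
Import Order.TTheory GRing.Theory Num.Theory.
Local Open Scope ring_scope.

Lemma sum_sub (R : numDomainType) (T : finType) (A B : {set T}) (f : T -> R) :
  (forall x, 0 <= f x) -> A \subset B -> \sum_(i in A) f i <= \sum_(i in B) f i.
Proof.
move=> f0 AB; rewrite [X in _ <= X](big_setID A) /= (setIidPr AB) lerDl.
by apply: sumr_ge0.
Qed.

Lemma ex_top (R : realFieldType) (T : finType) (w : T -> R) (k : nat) (S : {set T}) :
  exists B : {set T}, [&& B \subset S, #|B| == minn k #|S| &
     [forall x in B, forall y in S :\: B, w y <= w x]].
Proof.
elim: k => [|k [B /and3P [BS /eqP cB /forallP dom]]].
  exists set0; rewrite sub0set cards0 min0n eqxx /=.
  by apply/forallP => x; rewrite in_set0.
case: (set_0Vmem (S :\: B)) => [e|[x0 x0in]].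
  exists B; rewrite BS /=; apply/andP; split; last exact/forallP.
  have SB : S \subset B by rewrite -setD_eq0 e.
  have := subset_leq_card BS; have := subset_leq_card SB.
  move=> h1 h2; apply/eqP; lia.
case: (arg_maxP w x0in) => x xin xmax.
exists (x |: B).
have [xS xnB] := setDP xin.
apply/and3P; split.
- by rewrite subUset sub1set xS BS.
- rewrite cardsU1 xnB /=.
  have : (#|B| < #|S|)%N.
    apply: proper_card; apply/properP; split => //; by exists x.
  move=> h; apply/eqP; lia.
- apply/forallP => z; apply/implyP => zin; apply/forallP => y; apply/implyP => yin.
  have [yS ynxB] := setDP yin.
  have ynB : y \notin B by move: ynxB; rewrite in_setU1 negb_or => /andP [].
  have yin' : y \in S :\: B by rewrite inE ynB yS.
  move: zin; rewrite in_setU1 => /orP [/eqP -> | zB].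
  + exact: xmax.
  + by move: (dom z); rewrite zB /= => /forallP /(_ y); rewrite yin'.
Qed.
Lemma per_vertex (R : realFieldType) (T : finType) (w q : T -> R) (eps : R) (s : nat) (S : {set T}) :
  (forall x, 0 <= w x) -> (forall x, 0 <= q x) -> 0 < eps -> 1 <= (s.+1)%:R * eps ->
  exists Rm Mv : {set T}, [/\ Rm \subset S, (#|Mv| <= s * s)%N,
     \sum_(x in Rm) q x <= eps * \sum_(x in S) q x &
     forall e, e \in S :\: (Rm :|: Mv) -> w e <= eps * \sum_(x in S :\: Mv) w x].
Proof.
move=> w0 q0 eps0 seps.
pose top (X : {set T}) := xchoose (@ex_top _ _ w s X).
have topP X : [&& top X \subset X, #|top X| == minn s #|X| &
   [forall x in top X, forall y in X :\: top X, w y <= w x]] := xchooseP (@ex_top _ _ w s X).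
pose Tj j := iter j (fun X => X :\: top X) S.
have TjS j : Tj j \subset S.
  elim: j => [|j IH] /=; first exact: subxx.
  exact: subset_trans (subsetDl _ _) IH.
have cardT j : (#|S| <= #|Tj j| + j * s)%N.
  elim: j => [|j IH]; first by rewrite addn0.
  have -> : Tj j.+1 = Tj j :\: top (Tj j) by [].
  have /and3P [sub /eqP c _] := topP (Tj j).
  rewrite cardsD (setIidPr sub); lia.
have sumT j : \sum_(x in S) q x =
    \sum_(0 <= i < j) \sum_(x in top (Tj i)) q x + \sum_(x in Tj j) q x.
  elim: j => [|j IH]; first by rewrite big_geq // add0r.
  rewrite big_nat_recr //= IH -addrA; congr (_ + _).
  have /and3P [sub _ _] := topP (Tj j).
  by rewrite [LHS](big_setID (top (Tj j))) /= (setIidPr sub).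
pose qB (i : 'I_s.+1) := \sum_(x in top (Tj i)) q x.
case: (@arg_minP _ _ _ ord0 predT qB isT) => j _ jmin.
have hq : (s.+1)%:R * qB j <= \sum_(x in S) q x.
  rewrite (sumT s.+1) big_mkord -[X in X <= _]addr0; apply: lerD; last by apply: sumr_ge0.
  rewrite mulr_natl -[in X in _ *+ X](card_ord s.+1) -sumr_const; apply: ler_sum => i _.
  exact: jmin.
exists (top (Tj j)), (S :\: Tj j).
have /and3P [subj /eqP cj /forallP domj] := topP (Tj j).
have SD : S :\: (S :\: Tj j) = Tj j by rewrite setDDr setDv set0U (setIidPr (TjS j)).
split.
- exact: subset_trans subj (TjS j).
- rewrite cardsD (setIidPr (TjS j)). have := cardT j. have := ltn_ord j. nia.
- have q0' : 0 <= qB j by apply: sumr_ge0.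
  rewrite -/(qB j). move: hq seps. set n := (s.+1)%:R. set Q := \sum_(x in S) q x. nra.
- move=> e; rewrite SD => ein.
  case/setDP: ein => eS; rewrite in_setU negb_or => /andP [ntop nM].
  rewrite in_setD eS andbT negbK in nM.
  have eTd : e \in Tj j :\: top (Tj j) by rewrite in_setD ntop nM.
  have cs : #|top (Tj j)| = s.
    have : (#|top (Tj j)| < #|Tj j|)%N.
      apply: proper_card; apply/properP; split => //; by exists e.
    move=> h; lia.
  have hsum : s%:R * w e <= \sum_(x in top (Tj j)) w x.
    rewrite mulr_natl -[in X in _ *+ X]cs -sumr_const; apply: ler_sum => x xin.
    by move: (domj x); rewrite xin /= => /forallP /(_ e); rewrite eTd.
  have hsum2 : \sum_(x in top (Tj j)) w x + w e <= \sum_(x in Tj j) w x.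
    rewrite [X in _ <= X](big_setID (top (Tj j))) /= (setIidPr subj) lerD2l.
    have -> : w e = \sum_(x in [set e]) w x by rewrite big_set1.
    apply: sum_sub => //; by rewrite sub1set.
  have we0 := w0 e.
  move: hsum hsum2 seps; rewrite -natr1.
  set n := s%:R. set W := \sum_(x in Tj j) w x. set B := \sum_(x in top (Tj j)) w x. nra.
Qed.

Lemma sum_bigcup (R : numDomainType) (I T : finType) (A : I -> {set T}) (f : T -> R) :
 (forall x, 0 <= f x) -> \sum_(x in \bigcup_i A i) f x <= \sum_i \sum_(x in A i) f x.
Proof.
move=> f0.
have -> : \sum_i \sum_(x in A i) f x = \sum_i \sum_x (if x \in A i then f x else 0).
  by apply: eq_bigr => i _; rewrite big_mkcond.
rewrite exchange_big /= big_mkcond /=; apply: ler_sum => x _.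
case: ifP => [/bigcupP [i _ xi]|_]; last by apply: sumr_ge0 => i _; case: ifP.
rewrite (bigD1 i) //= xi -[X in X <= _]addr0 lerD2l.
by apply: sumr_ge0 => j _; case: ifP.
Qed.

Lemma double_count (R : numDomainType) (V E : finType) (ends : E -> V * V) (p : E -> R) (F : {set E}) :
 (forall e, 0 <= p e) -> \sum_v \sum_(e in delta ends v :&: F) p e <= 2 * \sum_(e in F) p e.
Proof.
move=> p0.
have -> : \sum_v \sum_(e in delta ends v :&: F) p e =
          \sum_v \sum_e (if e \in delta ends v :&: F then p e else 0).
  by apply: eq_bigr => v _; rewrite big_mkcond.
rewrite exchange_big /= mulr_sumr [X in _ <= X]big_mkcond /=; apply: ler_sum => e _.
case: ifP => eF.
- have -> : \sum_v (if e \in delta ends v :&: F then p e else 0) =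
            \sum_(v in [set v | e \in delta ends v]) p e.
    rewrite [RHS]big_mkcond /=; apply: eq_bigr => v _; by rewrite !inE eF andbT.
  rewrite sumr_const -[p e *+ _]mulr_natl; apply: ler_wpM2r => //.
  have : (#|[set v | e \in delta ends v]| <= 2)%N.
    apply: leq_trans (subset_leq_card (_ : _ \subset [set (ends e).1; (ends e).2])) _.
      apply/subsetP => v; rewrite /delta !inE => /orP [] /eqP ->; by rewrite eqxx ?orbT.
    by rewrite cards2; case: (_ != _).
  by move=> h; rewrite (ler_nat R _ 2).
- by rewrite big1 // => v _; rewrite inE eF andbF.
Qed.

Theorem lemma9 (R : realFieldType) (V E : finType) (ends : E -> V * V)
  (b : V -> R) (d : V -> E -> R) (p : E -> R) (I : {set {set E}})
  (Hends : forall e, (ends e).1 != (ends e).2)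
  (Hb : forall v, 0 <= b v) (Hd : forall v e, 0 <= d v e) (Hp : forall e, 0 <= p e)
  (HI : is_matroid I)
  (Fopt : {set E}) (Hopt : mdm_optimal ends b d p I Fopt)
  (eps : R) (Heps : 0 < eps) :
  exists M : {set E},
    [/\ mdm_feasible ends b d I M,
        profit p M >= (1 - 2 * eps) * profit p Fopt &
        forall v : V, exists Mv : {set E},
          [/\ Mv \subset M,
              (#|Mv|%:R <= 1 / eps ^+ 2) &
              forall e, e \in delta ends v :&: (M :\: Mv) ->
                d v e <= eps * (b v - load ends d v Mv)]].
Proof.
case: Hopt => [[FI Fload] Fmax].
case: HI => _ Hsub _.
have pF0 : 0 <= profit p Fopt by apply: sumr_ge0.
have xe : 1 / eps * eps = 1 by rewrite mul1r mulVf // gt_eqF.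
have x0 : 0 < 1 / eps by rewrite divr_gt0.
have sq : 1 / eps ^+ 2 = (1 / eps) ^+ 2 by rewrite expr_div_n expr1n.
case: (classic (exists n : nat, 1 / eps < n%:R)) => [exN | noN]; last first.
  have hn n : n%:R <= 1 / eps.
    by rewrite leNgt; apply/negP => h; apply: noN; exists n.
  exists Fopt; split => //.
  - move: pF0 Heps; set P := profit p Fopt; nra.
  - move=> v; exists Fopt; split => //.
    + have h1 := hn 1%N; have hc := hn #|Fopt|.
      rewrite sq; move: h1 hc; set x := 1 / eps; set c := #|Fopt|%:R; nra.
    + by move=> e; rewrite setDv setI0 inE.
pose P := fun n : nat => 1 / eps < n%:R.
have exP : exists n, P n := exN.
case: (ex_minnP exP) => N PN Nmin.
have N0 : (0 < N)%N.
  move: PN; case: N Nmin => // _; rewrite /P => h.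
  by have := lt_trans x0 h; rewrite ltxx.
pose s := N.-1.
have hs1 : s%:R <= 1/eps.
  rewrite leNgt; apply/negP => h; have := Nmin s h; rewrite /s; lia.
have hs2 : 1 <= (s.+1)%:R * eps.
  have -> : s.+1 = N by rewrite /s; lia.
  move: PN; rewrite /P; move: xe Heps; set x := 1 / eps; set n := N%:R; nra.
have hsq : (s * s)%:R <= 1 / eps ^+ 2.
  rewrite natrM sq; have s0 : 0 <= s%:R :> R by [].
  move: hs1 s0; set x := 1 / eps; set t := s%:R; nra.
pose Q v (RM : {set E} * {set E}) :=
  [/\ RM.1 \subset delta ends v :&: Fopt, (#|RM.2| <= s * s)%N,
      \sum_(x in RM.1) p x <= eps * \sum_(x in delta ends v :&: Fopt) p x &
      forall e, e \in (delta ends v :&: Fopt) :\: (RM.1 :|: RM.2) ->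
        d v e <= eps * \sum_(x in (delta ends v :&: Fopt) :\: RM.2) d v x].
have Hv v : exists RM, Q v RM.
  have [Rm [Mv H]] := @per_vertex _ _ (d v) p eps s (delta ends v :&: Fopt) (Hd v) Hp Heps hs2.
  by exists (Rm, Mv).
have [f fP] : exists f : V -> {set E} * {set E}, forall v, Q v (f v).
  exists (fun v => proj1_sig (constructive_indefinite_description _ (Hv v))).
  move=> v; exact: (proj2_sig (constructive_indefinite_description _ (Hv v))).
pose U := \bigcup_v (f v).1.
pose M := Fopt :\: U.
have MF : M \subset Fopt by apply: subsetDl.
exists M; split.
- split; first exact: Hsub FI MF.
  move=> v; apply: le_trans (Fload v); rewrite /load; apply: sum_sub => //.
  exact: setIS.
- have h1 : profit p Fopt <= profit p M + \sum_v \sum_(x in (f v).1) p x.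
    rewrite /profit [X in X <= _](big_setID M) /= (setIidPr MF) lerD2l.
    apply: le_trans _ (@sum_bigcup _ _ _ (fun v => (f v).1) p Hp); apply: sum_sub => //.
    by rewrite /M setDDr setDv set0U; exact: subsetIr.
  have h2 : \sum_v \sum_(x in (f v).1) p x <= eps * (2 * profit p Fopt).
    apply: le_trans (_ : \sum_v eps * \sum_(x in delta ends v :&: Fopt) p x <= _).
      by apply: ler_sum => v _; case: (fP v).
    rewrite -mulr_sumr; apply: ler_wpM2l; [exact: ltW | exact: double_count].
  move: h1 h2; set PF := profit p Fopt; set PM := profit p M.
  set S := \sum_v _; nra.
- move=> v; case: (fP v) => Rsub Mcard Rprof Hdem.
  exists ((f v).2 :&: M); split.
  + exact: subsetIr.
  + apply: le_trans hsq; rewrite ler_nat; apply: leq_trans Mcard.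
    apply: subset_leq_card; exact: subsetIl.
  + move=> e /setIP [edel /setDP [eM]]; rewrite in_setI eM andbT => eNMv.
    have [eF eU] := setDP eM.
    have eNR : e \notin (f v).1.
      apply/negP => h; apply: (negP eU); apply/bigcupP; by exists v.
    have := Hdem e.
    rewrite in_setD in_setU negb_or eNR eNMv in_setI edel eF => /(_ isT) hde.
    apply: le_trans hde _; apply: ler_wpM2l; first exact: ltW.
    have hl : load ends d v ((f v).2 :&: M) <=
              \sum_(x in (delta ends v :&: Fopt) :&: (f v).2) d v x.
      rewrite /load; apply: sum_sub => //.
      apply/subsetP => x /setIP [xd /setIP [xMv xM]].
      have [xF _] := setDP xM; by rewrite !in_setI xd xF xMv.
    have hF := Fload v; rewrite /load (big_setID (f v).2) /= in hF.
    move: hl hF; set L := load _ _ _ _; set A := \sum_(x in _ :&: (f v).2) _.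
    set B := \sum_(x in _ :\: (f v).2) _; lra.
Qed.
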